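(* Let $S_1=(x_1,y_1),\ldots,S_4=(x_4,y_4)$ be four points in the plane with $x_1\le x_2\le x_3\le x_4$, and let $\delta_1,\ldots,\delta_4$ be positive integers. For $i\in\{1,\dots,4\}$ define the pivot point $$P_i=\left(x_i+\frac{\sum_{j=1}^4\delta_j(x_j-x_i)^2}{\sum_{j=1}^4\delta_j(x_j-x_i)},\ y_i+\frac{\sum_{j=1}^4\delta_j(x_j-x_i)(y_j-y_i)}{\sum_{j=1}^4\delta_j(x_j-x_i)}\right)$$ whenever the denominator is nonzero. Fix $i$ such that $P_i$ is defined and the three points $S_a,S_b,S_c$ ($a<b<c$, $\{a,b,c\}=\{1,2,3,4\}\setminus\{i\}$) are not collinear, and let $(\lambda_a,\lambda_b,\lambda_c)$ be the barycentric coordinates of $P_i$ with respect to the triangle $S_aS_bS_c$. Then the sign pattern of $(\lambda_a,\lambda_b,\lambda_c)$ is neither $+-+$ (i.e. $\lambda_a>0,\lambda_b<0,\lambda_c>0$) nor $-+-$ (i.e. $\lambda_a<0,\lambda_b>0,\lambda_c<0$).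
   Context: The pivot point $P_i$ is the point through which the least-squares regression line of the data, in which each $S_j$ appears $\delta_j$ times, always passes regardless of how many additional copies of $S_i$ are added. For a non-degenerate triangle $ABC$, the barycentric coordinates of $Q$ are the unique reals $(\lambda_A,\lambda_B,\lambda_C)$ with sum $1$ and $Q=\lambda_AA+\lambda_BB+\lambda_CC$; their sign pattern determines which of the seven regions cut out by the edge-lines of the triangle contains $Q$. *)

(* Defs.v *)
From mathcomp Require Import all_boot all_order all_algebra.
Set Implicit Arguments. Unset Strict Implicit. Unset Printing Implicit Defensive.
Import Order.TTheory GRing.Theory Num.Theory.
Local Open Scope ring_scope.

(* Points S_j = (x j, y j), j : 'I_4 (index j represents S_{j+1}). *)

Section Pivot.
Variable R : realFieldType.

Definition pivot_den (x : 'I_4 -> R) (delta : 'I_4 -> nat) (i : 'I_4) : R :=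
  \sum_(j < 4) (delta j)%:R * (x j - x i).

Definition pivot_x (x : 'I_4 -> R) (delta : 'I_4 -> nat) (i : 'I_4) : R :=
  x i + (\sum_(j < 4) (delta j)%:R * (x j - x i) ^+ 2) / pivot_den x delta i.

Definition pivot_y (x y : 'I_4 -> R) (delta : 'I_4 -> nat) (i : 'I_4) : R :=
  y i + (\sum_(j < 4) (delta j)%:R * ((x j - x i) * (y j - y i)))
        / pivot_den x delta i.

Definition collinear (ax ay bx by_ cx cy : R) : Prop :=
  (bx - ax) * (cy - ay) - (by_ - ay) * (cx - ax) = 0.

Definition is_barycentric (ax ay bx by_ cx cy qx qy la lb lc : R) : Prop :=
  [/\ la + lb + lc = 1,
      qx = la * ax + lb * bx + lc * cx &
      qy = la * ay + lb * by_ + lc * cy].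

End Pivot.

(* Main.v *)
Require Import Defs.
From mathcomp Require Import all_boot all_order all_algebra.
From mathcomp Require Import ring lra zify.
Import Order.TTheory GRing.Theory Num.Theory.
Local Open Scope ring_scope.

Lemma sign_pair (R : realFieldType) (l1 l2 D d1 d2 u1 u2 : R) :
  l1 * D = d1 * u1 -> l2 * D = d2 * u2 -> 0 < d1 -> 0 < d2 -> u1 <= u2 ->
  (0 < D -> ~ (0 < l1 /\ l2 < 0)) /\ (D < 0 -> ~ (l1 < 0 /\ 0 < l2)).
Proof.
move=> h1 h2 d1p d2p u12; split=> hD [hl1 hl2].
- have: 0 < d1 * u1 by rewrite -h1 mulr_gt0.
  rewrite pmulr_rgt0 // => u1p.
  have: 0 < d2 * u2 by rewrite pmulr_rgt0 //; apply: lt_le_trans u12.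
  by rewrite -h2 pmulr_lgt0 // ltNge (ltW hl2).
- have: 0 < d1 * u1 by rewrite -h1 nmulr_lgt0.
  rewrite pmulr_rgt0 // => u1p.
  have: 0 < d2 * u2 by rewrite pmulr_rgt0 //; apply: lt_le_trans u12.
  by rewrite -h2 nmulr_lgt0 // ltNge (ltW hl2).
Qed.

Lemma alg (R : realFieldType) (xi yi xa ya xb yb xc yc da db dc la lb lc : R) :
  let D := da*(xa-xi)+db*(xb-xi)+dc*(xc-xi) in D != 0 ->
  (xb - xa) * (yc - ya) - (yb - ya) * (xc - xa) != 0 ->
  la+lb+lc = 1 ->
  xi + (da*(xa-xi)^+2 + db*(xb-xi)^+2 + dc*(xc-xi)^+2)/D = la*xa+lb*xb+lc*xc ->
  yi + (da*((xa-xi)*(ya-yi)) + db*((xb-xi)*(yb-yi)) + dc*((xc-xi)*(yc-yi)))/D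
     = la*ya+lb*yb+lc*yc ->
  [/\ la*D = da*(xa-xi), lb*D = db*(xb-xi) & lc*D = dc*(xc-xi)].
Proof.
move=> D hD hdet h1 hX hY.
set Sx := _ + _ + dc*(xc-xi)^+2 in hX.
set Sy := _ + _ + dc*((xc-xi)*(yc-yi)) in hY.
have h2 : (la*xa+lb*xb+lc*xc)*D - xi*D - Sx = 0.
  by rewrite -hX mulrDl divfK //; ring.
have h3 : (la*ya+lb*yb+lc*yc)*D - yi*D - Sy = 0.
  by rewrite -hY mulrDl divfK //; ring.
have h0 : la+lb+lc-1 = 0 by rewrite h1 subrr.
set det := _ - _ in hdet.
have eb : (lb*D - db*(xb-xi)) * det = 0.
  have -> : (lb*D - db*(xb-xi)) * det =
    (yc-ya)*(((la*xa+lb*xb+lc*xc)*D - xi*D - Sx) - xa*(la+lb+lc-1)*D)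
    - (xc-xa)*(((la*ya+lb*yb+lc*yc)*D - yi*D - Sy) - ya*(la+lb+lc-1)*D).
    by rewrite /det /D /Sx /Sy; ring.
  by rewrite h2 h3 h0; ring.
have ec : (lc*D - dc*(xc-xi)) * det = 0.
  have -> : (lc*D - dc*(xc-xi)) * det =
    (xb-xa)*(((la*ya+lb*yb+lc*yc)*D - yi*D - Sy) - ya*(la+lb+lc-1)*D)
    - (yb-ya)*(((la*xa+lb*xb+lc*xc)*D - xi*D - Sx) - xa*(la+lb+lc-1)*D).
    by rewrite /det /D /Sx /Sy; ring.
  by rewrite h2 h3 h0; ring.
move: eb ec => /eqP eb /eqP ec; move: eb ec; rewrite !mulf_eq0 (negbTE hdet) !orbF !subr_eq0 => /eqP eb /eqP ec.
split=> //.
apply/eqP; rewrite -subr_eq0.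
have -> : la * D - da * (xa - xi) = (la+lb+lc-1)*D - (lb*D - db*(xb-xi)) - (lc*D - dc*(xc-xi)).
  by rewrite /D; ring.
by rewrite h0 eb ec !subrr; apply/eqP; ring.
Qed.

Lemma sum3 (R : realFieldType) (F : 'I_4 -> R) (i a b c : 'I_4) :
  (a < b)%N -> (b < c)%N -> a != i -> b != i -> c != i -> F i = 0 ->
  \sum_(j < 4) F j = F a + F b + F c.
Proof.
move=> hab hbc hai hbi hci hFi.
have ne : forall u v : 'I_4, u != v -> (u : nat) <> v.
  by move=> u v /eqP h e; apply: h; apply: val_inj.
have ha := ne _ _ hai; have hb := ne _ _ hbi; have hc := ne _ _ hci.
have ltc := ltn_ord c.
rewrite (bigD1 a) //= (bigD1 b) /=; last by rewrite -val_eqE /= neq_ltn hab orbT.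
rewrite (bigD1 c) /=; last by rewrite -!val_eqE /= !neq_ltn hbc (ltn_trans hab hbc) !orbT.
rewrite (bigD1 i) /=; last by rewrite -!val_eqE /=; repeat (apply/andP; split); apply/eqP; lia.
rewrite hFi big1 ?addr0 ?addrA //.
move=> j /andP [/andP [/andP [/eqP ja /eqP jb] /eqP jc] /eqP ji].
have := ltn_ord j; have := ltn_ord i.
have ja' : (j:nat) <> a by move=> e; apply: ja; apply: val_inj.
have jb' : (j:nat) <> b by move=> e; apply: jb; apply: val_inj.
have jc' : (j:nat) <> c by move=> e; apply: jc; apply: val_inj.
have ji' : (j:nat) <> i by move=> e; apply: ji; apply: val_inj.
lia.
Qed.

Theorem corollary1 (R : realFieldType) (x y : 'I_4 -> R) (delta : 'I_4 -> nat)
  (hdelta : forall j, (0 < delta j)%N)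
  (hx : forall j k : 'I_4, (j <= k)%N -> x j <= x k)
  (i a b c : 'I_4)
  (hab : (a < b)%N) (hbc : (b < c)%N)
  (hai : a != i) (hbi : b != i) (hci : c != i)
  (hden : pivot_den x delta i != 0)
  (hncol : ~ collinear (x a) (y a) (x b) (y b) (x c) (y c))
  (la lb lc : R)
  (hbar : is_barycentric (x a) (y a) (x b) (y b) (x c) (y c)
            (pivot_x x delta i) (pivot_y x y delta i) la lb lc) :
  ~ (0 < la /\ lb < 0 /\ 0 < lc) /\ ~ (la < 0 /\ 0 < lb /\ lc < 0).
Proof.
case: hbar => h1 hX hY.
have eD : pivot_den x delta i = (delta a)%:R * (x a - x i) + (delta b)%:R * (x b - x i)
   + (delta c)%:R * (x c - x i).
  by rewrite /pivot_den (@sum3 _ _ i a b c hab hbc hai hbi hci) // subrr mulr0.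
have eX : \sum_(j < 4) (delta j)%:R * (x j - x i) ^+ 2 =
   (delta a)%:R * (x a - x i) ^+ 2 + (delta b)%:R * (x b - x i) ^+ 2
   + (delta c)%:R * (x c - x i) ^+ 2.
  by rewrite (@sum3 _ _ i a b c hab hbc hai hbi hci) // subrr expr0n mulr0.
have eY : \sum_(j < 4) (delta j)%:R * ((x j - x i) * (y j - y i)) =
   (delta a)%:R * ((x a - x i) * (y a - y i)) + (delta b)%:R * ((x b - x i) * (y b - y i))
   + (delta c)%:R * ((x c - x i) * (y c - y i)).
  by rewrite (@sum3 _ _ i a b c hab hbc hai hbi hci) // subrr mul0r mulr0.
move: hX hY hden; rewrite /pivot_x /pivot_y eX eY eD => hX hY hden.
have hdet : (x b - x a) * (y c - y a) - (y b - y a) * (x c - x a) != 0.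
  by apply/eqP.
have [ea eb ec] := @alg R _ _ _ _ _ _ _ _ _ _ _ _ _ _ hden hdet h1 hX hY.
set D := _ + _ + _ in ea eb ec hden.
have dp : forall j, 0 < ((delta j)%:R : R) by move=> j; rewrite ltr0n.
have uab : x a - x i <= x b - x i by rewrite lerD2r hx // ltnW.
have ubc : x b - x i <= x c - x i by rewrite lerD2r hx // ltnW.
have [pab nab] := @sign_pair R _ _ _ _ _ _ _ ea eb (dp a) (dp b) uab.
have [pbc nbc] := @sign_pair R _ _ _ _ _ _ _ eb ec (dp b) (dp c) ubc.
split=> [[ha [hb hc]] | [ha [hb hc]]]; (have [Dn|Dp] : D < 0 \/ 0 < D by
  move: hden; rewrite neq_lt => /orP[] ->; [left|right]).
- by apply: nbc.
- by apply: pab.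
- by apply: nab.
- by apply: pbc.
Qed.
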